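(* Let $f:[0,\infty)\to\mathbb{R}$ be differentiable, let $0<a<b<\infty$, and suppose $f'$ is Lebesgue integrable on $[a,b]$. Let $m\in(0,1]$ and $q\ge1$, and suppose $|f'|^q$ is $(1,m)$-GA-convex on $[0,\max\{a^{1/m},b\}]$. Then \[ \biggl|\frac{b^2f(b)-a^2f(a)}{2}-\int_a^b xf(x)\,dx\biggr|\le\frac{(b^3-a^3)^{1-1/q}}{6}\Bigl\{m\bigl[L(a^3,b^3)-a^3\bigr]\bigl|f'(a^{1/m})\bigr|^q+\bigl[b^3-L(a^3,b^3)\bigr]|f'(b)|^q\Bigr\}^{1/q}. \]
   Context: For $c>0$, $h:[0,c]\to\mathbb{R}$ and $(\alpha,m)\in(0,1]^2$, $h$ is called $(\alpha,m)$-GA-convex on $[0,c]$ if $h\bigl(x^\lambda y^{m(1-\lambda)}\bigr)\le\lambda^\alpha h(x)+m(1-\lambda^\alpha)h(y)$ for all $x,y\in[0,c]$ and all $\lambda\in[0,1]$ (with the convention $0^0=1$). For $x,y>0$, $x\neq y$, the logarithmic mean is $L(x,y)=\frac{y-x}{\ln y-\ln x}$. *)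

(* Defs.v *)
From Stdlib Require Import Reals Lra.
Open Scope R_scope.

(* Real power for a nonnegative base, with the conventions 0^0 = 1 and
   0^y = 0 for y <> 0 (only used with y >= 0). *)
Definition rpow (x y : R) : R :=
  if Rlt_dec 0 x then Rpower x y
  else if Req_EM_T y 0 then 1 else 0.

Definition GA_convex (alpha m c : R) (h : R -> R) : Prop :=
  forall x y lam, 0 <= x <= c -> 0 <= y <= c -> 0 <= lam <= 1 ->
    h (rpow x lam * rpow y (m * (1 - lam)))
      <= rpow lam alpha * h x + m * (1 - rpow lam alpha) * h y.

Definition logmean (x y : R) : R := (y - x) / (ln y - ln x).

Definition right_deriv (f : R -> R) (x l : R) : Prop :=
  forall eps, 0 < eps -> exists delta, 0 < delta /\
    forall h, 0 < h < delta -> Rabs ((f (x + h) - f x) / h - l) < eps.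

(* Main.v *)
Require Import Defs.
From Stdlib Require Import Reals Lra Psatz.
From Coquelicot Require Import Coquelicot.
Open Scope R_scope.

Lemma rpow_pos x y : 0 < x -> rpow x y = Rpower x y.
Proof. intros H; unfold rpow; destruct (Rlt_dec 0 x); [reflexivity| lra]. Qed.

Lemma rpow_ge0 x y : 0 <= rpow x y.
Proof. unfold rpow; destruct (Rlt_dec 0 x).
  - unfold Rpower; left; apply exp_pos.
  - destruct (Req_EM_T y 0); lra. Qed.

Lemma bern v q : 0 < v -> 1 <= q -> 1 + q*(v-1) <= Rpower v q.
Proof.
  intros Hv Hq. unfold Rpower.
  set (s := ln v). assert (Ev : v = exp s) by (unfold s; rewrite exp_ln; auto).
  rewrite Ev.
  replace (q * s) with (s + (q-1)*s) by ring. rewrite exp_plus.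
  pose proof (exp_ineq1_le ((q-1)*s)) as H1.
  pose proof (exp_ineq1_le (-s)) as H2.
  assert (E : exp (-s) * exp s = 1) by (rewrite <- exp_plus; replace (-s+s) with 0 by ring; apply exp_0).
  pose proof (exp_pos s) as Hp.
  assert (H3: 0 <= s * exp s - exp s + 1) by nra.
  nra.
Qed.

Lemma young w k K h q : 0 <= w -> 0 < k -> 1 <= q -> Rpower k q = K ->
  rpow w q <= h -> w <= k*(h/(q*K) + 1 - 1/q).
Proof.
  intros Hw Hk Hq HK Hh.
  assert (HKp : 0 < K) by (rewrite <- HK; unfold Rpower; apply exp_pos).
  assert (Hh0 : 0 <= h) by (pose proof (rpow_ge0 w q); lra).
  destruct Hw as [Hw|Hw].
  - rewrite rpow_pos in Hh by lra.
    pose proof (bern (w/k) q) as B.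
    assert (Hv : 0 < w / k) by (apply Rdiv_lt_0_compat; lra).
    specialize (B Hv Hq).
    assert (E : Rpower (w/k) q = Rpower w q / K).
    { rewrite <- HK. unfold Rpower. rewrite ln_div by lra.
      replace (q*(ln w - ln k)) with (q*ln w + -(q*ln k)) by ring.
      rewrite exp_plus, exp_Ropp. reflexivity. }
    rewrite E in B.
    assert (B2 : q*(w/k) <= h/K + q - 1).
    { assert (Rpower w q / K <= h / K) by (apply Rmult_le_compat_r; [left; apply Rinv_0_lt_compat; lra| lra]). lra. }
    assert (Hq0 : 0 < q) by lra.
    apply Rmult_le_reg_l with (q / k). apply Rdiv_lt_0_compat; lra.
    replace (q / k * w) with (q*(w/k)) by (field; lra).
    replace (q / k * (k * (h / (q * K) + 1 - 1 / q))) with (h/K + q - 1) by (field; repeat split; lra).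
    lra.
  - subst w. assert (0 <= h / (q*K)) by (apply Rdiv_le_0_compat; nra).
    assert (1/q <= 1) by (unfold Rdiv; rewrite Rmult_1_l; rewrite <- Rinv_1; apply Rinv_le_contravar; lra).
    nra.
Qed.

Lemma rpow_1 t : 0 <= t -> rpow t 1 = t.
Proof. intros [H|H]. rewrite rpow_pos by lra. apply Rpower_1; lra.
  subst; unfold rpow. destruct (Rlt_dec 0 0); [lra|]. destruct (Req_EM_T 1 0); lra. Qed.

Lemma ga_step (fp : R -> R) a b m q x :
  0 < a -> a < b -> 0 < m <= 1 ->
  GA_convex 1 m (Rmax (rpow a (1 / m)) b) (fun x => rpow (Rabs (fp x)) q) ->
  a <= x <= b ->
  rpow (Rabs (fp x)) q <=
    (ln x - ln a)/(ln b - ln a) * rpow (Rabs (fp b)) q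
    + m * (1 - (ln x - ln a)/(ln b - ln a)) * rpow (Rabs (fp (rpow a (1/m)))) q.
Proof.
  intros Ha Hab Hm Hc Hx.
  assert (Hl : ln a < ln b) by (apply ln_increasing; lra).
  assert (Hlx1 : ln a <= ln x) by (destruct (Req_dec a x); [subst; lra| left; apply ln_increasing; lra]).
  assert (Hlx2 : ln x <= ln b) by (destruct (Req_dec x b); [subst; lra| left; apply ln_increasing; lra]).
  set (t := (ln x - ln a)/(ln b - ln a)).
  assert (Ht : 0 <= t <= 1).
  { unfold t; split. apply Rdiv_le_0_compat; lra.
    apply (Rmult_le_reg_r (ln b - ln a)); [lra|]. unfold Rdiv; rewrite Rmult_assoc, Rinv_l; lra. }
  assert (Hap : 0 < rpow a (1/m)) by (rewrite rpow_pos by lra; unfold Rpower; apply exp_pos).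
  specialize (Hc b (rpow a (1/m)) t).
  simpl in Hc. rewrite rpow_1 in Hc by lra.
  assert (E : rpow b t * rpow (rpow a (1 / m)) (m * (1 - t)) = x).
  { rewrite (rpow_pos b) by lra. rewrite (rpow_pos (rpow a (1/m))) by lra.
    rewrite (rpow_pos a) by lra. rewrite Rpower_mult.
    unfold Rpower. rewrite <- exp_plus.
    replace (t * ln b + 1 / m * (m * (1 - t)) * ln a) with (ln x).
    apply exp_ln; lra.
    unfold t; field; lra. }
  rewrite E in Hc. apply Hc.
  split. lra. apply Rmax_r.
  split. lra. apply Rmax_l.
  exact Ht.
Qed.

Lemma g_cont (f fp : R -> R) y : (forall x, 0 < x -> derivable_pt_lim f x (fp x)) -> 0 < y ->
  continuous (fun s => s * f s) y.
Proof.
  intros Hd Hy. apply (continuous_mult (fun s => s) f). apply continuous_id.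
  apply continuity_pt_filterlim. apply derivable_continuous_pt. exists (fp y). apply Hd; auto.
Qed.

Lemma F_deriv (f fp : R -> R) a x : 0 < a -> (forall x, 0 < x -> derivable_pt_lim f x (fp x)) -> 0 < x ->
  derivable_pt_lim (fun y => y^2 * f y / 2 - RInt (fun s => s * f s) a y) x (x^2 * fp x / 2).
Proof.
  intros Ha Hd Hx. apply is_derive_Reals.
  replace (x^2 * fp x / 2) with ((2 * x * f x + x^2 * fp x)/2 - x * f x) by field.
  apply (is_derive_minus (fun y => y^2 * f y / 2) (fun y => RInt (fun s => s * f s) a y)).
  - apply (is_derive_scal_l (fun y => y^2 * f y) _ _ (/2)).
    apply is_derive_Reals.
    replace (2 * x * f x + x ^ 2 * fp x) with (INR 2 * x^(pred 2) * f x + x^2 * fp x) by (simpl; ring).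
    apply (derivable_pt_lim_mult (fun y => y^2) f x). apply derivable_pt_lim_pow. apply Hd; auto.
  - apply (is_derive_RInt (fun s => s * f s) _ a x).
    + apply (locally_interval _ x 0 p_infty); simpl; auto.
      intros y Hy _. apply (@RInt_correct R_CompleteNormedModule). apply (@ex_RInt_continuous R_CompleteNormedModule).
      intros z Hz. apply (g_cont f fp); auto.
      destruct Hz. unfold Rmin in *. destruct (Rle_dec a y); lra.
    + apply (g_cont f fp); auto.
Qed.

Lemma Phi_deriv k K q m A B a l x : 0 < x -> l <> 0 -> q <> 0 -> K <> 0 ->
  derivable_pt_lim (fun x => k/2 * (1/(q*K) * (m*B*x^3/3 + (A - m*B)/l * (x^3*(ln x - ln a)/3 - x^3/9)) + (1-1/q)*x^3/3)) x
    (k/2 * x^2 * (((ln x - ln a)/l * A + m*(1 - (ln x - ln a)/l)*B)/(q*K) + 1 - 1/q)).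
Proof.
  intros Hx Hl Hq HK. apply is_derive_Reals.
  auto_derive. lra. field. repeat split; auto; lra.
Qed.

Theorem corollary3p2 (f fp : R -> R) (a b m q : R)
  (Hd0 : right_deriv f 0 (fp 0))
  (Hd : forall x, 0 < x -> derivable_pt_lim f x (fp x))
  (Ha : 0 < a) (Hab : a < b)
  (Hm : 0 < m <= 1) (Hq : 1 <= q)
  (Hconv : GA_convex 1 m (Rmax (rpow a (1 / m)) b)
             (fun x => rpow (Rabs (fp x)) q))
  (pr : Riemann_integrable (fun x => x * f x) a b) :
  Rabs ((b ^ 2 * f b - a ^ 2 * f a) / 2 - RiemannInt pr)
  <= rpow (b ^ 3 - a ^ 3) (1 - 1 / q) / 6 *
     rpow (m * (logmean (a ^ 3) (b ^ 3) - a ^ 3)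
             * rpow (Rabs (fp (rpow a (1 / m)))) q
           + (b ^ 3 - logmean (a ^ 3) (b ^ 3)) * rpow (Rabs (fp b)) q)
          (1 / q).
Proof.
  pose proof (fun x => ga_step fp a b m q x Ha Hab Hm Hconv) as Hpt.
  assert (Hl : ln a < ln b) by (apply ln_increasing; lra).
  set (l := ln b - ln a) in *.
  assert (Hl0 : 0 < l) by (unfold l; lra).
  set (A := rpow (Rabs (fp b)) q) in *.
  set (B := rpow (Rabs (fp (rpow a (1 / m)))) q) in *.
  assert (HA : 0 <= A) by apply rpow_ge0.
  assert (HB : 0 <= B) by apply rpow_ge0.
  assert (Ha3 : 0 < a^3) by (apply pow_lt; lra).
  assert (Hb3 : a^3 < b^3) by (assert (0 < a*b) by nra; simpl; nra).
  set (D := b^3 - a^3).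
  assert (HD : 0 < D) by (unfold D; lra).
  assert (HL : logmean (a^3) (b^3) = D/(3*l)).
  { unfold logmean, l, D. rewrite !ln_pow by lra.
    replace (INR 3) with 3 by (simpl; ring). field. lra. }
  rewrite HL.
  assert (Hexp : exp (3*l) = b^3/a^3).
  { replace (3*l) with (ln (b^3/a^3)). apply exp_ln. apply Rdiv_lt_0_compat; lra.
    rewrite ln_div by lra. rewrite !ln_pow by lra. unfold l. simpl INR. ring. }
  assert (HLa : a^3 < D/(3*l)).
  { pose proof (exp_ineq1 (3*l)) as E. rewrite Hexp in E.
    apply Rmult_lt_reg_r with (3*l). lra.
    unfold Rdiv. rewrite Rmult_assoc, Rinv_l by lra.
    assert (a^3*(1+3*l) < b^3).
    { apply Rmult_lt_reg_r with (/ a^3). apply Rinv_0_lt_compat; lra.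
      replace (b^3 * / a^3) with (b^3/a^3) by reflexivity.
      replace (a ^ 3 * (1 + 3 * l) * / a ^ 3) with (1 + 3*l) by (field; lra). lra. }
    unfold D. lra. }
  assert (HLb : D/(3*l) < b^3).
  { pose proof (exp_ineq1 (-(3*l))) as E. rewrite exp_Ropp, Hexp in E.
    rewrite Rinv_div in E.
    apply Rmult_lt_reg_r with (3*l). lra.
    unfold Rdiv. rewrite Rmult_assoc, Rinv_l by lra.
    assert (1 - 3*l < a^3/b^3) by lra.
    assert (b^3*(1-3*l) < a^3).
    { apply Rmult_lt_reg_r with (/ b^3). apply Rinv_0_lt_compat; lra.
      replace (a^3 * / b^3) with (a^3/b^3) by reflexivity.
      replace (b ^ 3 * (1 - 3 * l) * / b ^ 3) with (1 - 3*l) by (field; lra). lra. }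
    unfold D. lra. }
  rewrite <- (RInt_Reals _ _ _ pr).
  pose (F := (fun y => y^2 * f y / 2 - RInt (fun s => s * f s) a y) : R -> R).
  replace ((b ^ 2 * f b - a ^ 2 * f a) / 2 - RInt (fun x : R => x * f x) a b) with (F b - F a)
    by (unfold F; assert (Z : RInt (fun s => s * f s) a a = 0) by apply (@RInt_point R_CompleteNormedModule); rewrite Z; unfold Rdiv; ring).
  assert (HF : forall x, a <= x <= b -> derivable_pt_lim F x (x^2 * fp x / 2)).
  { intros x Hx. apply F_deriv; auto; lra. }
  set (S := m * (D / (3 * l) - a ^ 3) * B + (b ^ 3 - D / (3 * l)) * A).
  assert (HRge : 0 <= rpow D (1 - 1 / q) / 6 * rpow S (1 / q)).
  { pose proof (rpow_ge0 D (1-1/q)). pose proof (rpow_ge0 S (1/q)). nra. }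
  destruct (Rle_lt_dec S 0) as [HS|HS].
  - assert (A = 0 /\ B = 0) as [A0 B0].
    { unfold S in HS.
      assert (P1 : 0 <= m * (D / (3 * l) - a ^ 3)) by nra.
      assert (P2 : 0 < b ^ 3 - D / (3 * l)) by lra.
      assert (P3 : 0 < m * (D / (3 * l) - a ^ 3)) by nra.
      assert (0 <= m * (D / (3 * l) - a ^ 3) * B) by nra.
      assert (0 <= (b ^ 3 - D / (3 * l)) * A) by nra.
      split; nra. }
    assert (Hz : forall x, a <= x <= b -> x^2 * fp x / 2 = 0).
    { intros x Hx. specialize (Hpt x Hx). fold l A B in Hpt. rewrite A0, B0 in Hpt.
      destruct (Req_dec (fp x) 0) as [E|E]. rewrite E; unfold Rdiv; ring.
      exfalso. rewrite rpow_pos in Hpt by (apply Rabs_pos_lt; auto).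
      assert (0 < Rpower (Rabs (fp x)) q) by (unfold Rpower; apply exp_pos). lra. }
    destruct (MVT_cor2 F (fun x => x^2 * fp x / 2) a b Hab HF) as [c [Ec Hc]].
    rewrite Ec, Hz by lra. rewrite Rmult_0_l, Rabs_R0. exact HRge.
  - set (K := S / D).
    assert (HK : 0 < K) by (unfold K; apply Rdiv_lt_0_compat; lra).
    set (k := Rpower K (1/q)).
    assert (Hk : 0 < k) by (unfold k, Rpower; apply exp_pos).
    assert (HkK : Rpower k q = K).
    { unfold k. rewrite Rpower_mult. replace (1/q*q) with 1 by (field; lra). apply Rpower_1; lra. }
    pose (Phi := fun x => k/2 * (1/(q*K) * (m*B*x^3/3 + (A - m*B)/l * (x^3*(ln x - ln a)/3 - x^3/9)) + (1-1/q)*x^3/3)).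
    pose (phi := fun x => k/2 * x^2 * (((ln x - ln a)/l * A + m*(1 - (ln x - ln a)/l)*B)/(q*K) + 1 - 1/q)).
    assert (HPhi : forall x, a <= x <= b -> derivable_pt_lim Phi x (phi x)).
    { intros x Hx. apply Phi_deriv; lra. }
    assert (Hbd : forall x, a <= x <= b -> Rabs (x^2 * fp x / 2) <= phi x).
    { intros x Hx. specialize (Hpt x Hx). fold l A B in Hpt.
      pose proof (young (Rabs (fp x)) k K _ q (Rabs_pos _) Hk Hq HkK Hpt) as Y.
      unfold phi. rewrite Rabs_div by lra. rewrite Rabs_mult.
      rewrite (Rabs_pos_eq (x^2)) by (apply pow_le; lra).
      rewrite (Rabs_pos_eq 2) by lra.
      assert (0 <= x^2) by (apply pow_le; lra).
      apply Rmult_le_compat_l with (r := x^2/2) in Y; [|lra].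
      unfold Rdiv in *. nra. }
    assert (Hdiff : Phi b - Phi a = k * D / 6).
    { unfold Phi. fold l. rewrite Rminus_diag. unfold K, S, D. field.
      repeat split; try lra.
      match goal with |- ?e <> 0 => replace e with (S*(3*l)) by (unfold S, D; field; lra) end.
      apply Rgt_not_eq. nra. }
    assert (Hrhs : k * D / 6 = rpow D (1 - 1 / q) / 6 * rpow S (1 / q)).
    { rewrite !rpow_pos by lra. unfold k, K, Rpower. rewrite ln_div by lra.
      replace (1/q * (ln S - ln D)) with (1/q * ln S + - (1/q * ln D)) by ring.
      replace ((1 - 1/q) * ln D) with (ln D + - (1/q * ln D)) by ring.
      rewrite !exp_plus, exp_ln by lra. unfold Rdiv; ring. }
    rewrite <- Hrhs, <- Hdiff.
    apply Rabs_le. split.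
    + destruct (MVT_cor2 (fun x => Phi x + F x) (fun x => phi x + x^2 * fp x / 2) a b Hab) as [c [Ec Hc]].
      { intros c Hc. apply (derivable_pt_lim_plus Phi F); auto. }
      pose proof (Hbd c ltac:(lra)) as Hb. apply Rabs_le_between in Hb.
      assert (0 <= (phi c + c ^ 2 * fp c / 2) * (b - a)) by (apply Rmult_le_pos; lra).
      lra.
    + destruct (MVT_cor2 (fun x => Phi x - F x) (fun x => phi x - x^2 * fp x / 2) a b Hab) as [c [Ec Hc]].
      { intros c Hc. apply (derivable_pt_lim_minus Phi F); auto. }
      pose proof (Hbd c ltac:(lra)) as Hb. apply Rabs_le_between in Hb.
      assert (0 <= (phi c - c ^ 2 * fp c / 2) * (b - a)) by (apply Rmult_le_pos; lra).
      lra.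
Qed.
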